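(* Let $\omega=\sum_{\mu,\nu}\omega_{\mu\nu}\zeta^{\alpha_\mu}\otimes\zeta^{\alpha_\nu}\in\mathfrak h\otimes\mathfrak h$. Suppose that for all $i\ne j$ in $\Gamma$, $$\sum_{k=0}^{1-a_{ij}}(-1)^k\begin{bmatrix}1-a_{ij}\\k\end{bmatrix}_q\,q^{k(\omega_{ji}-\omega_{ij})}=0.$$ This condition is equivalent to $\omega_{ij}-\omega_{ji}\in\{a_{ij},a_{ij}+2,\dots,-a_{ij}\}$ for all $i\ne j$. Then for every $(a_i)_{i\in\Gamma}\in\mathbb C^{\Gamma}$: - there is a unique character $\epsilon$ (unital algebra homomorphism to $\mathbb C$) of $U_q(\mathfrak n_+)^{\omega}$ with $\epsilon(\tilde e_i)=a_i$ for all $i$; and - there is a unique character of $U_q(\mathfrak n_-)^{\omega}$ taking the value $a_i$ on $\tilde f_i$ for all $i$. In particular, the sets of characters of $U_q(\mathfrak n_\pm)^{\omega}$ are in bijection with $\mathbb C^{\Gamma}$.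
   Context: Setting. - $0<|q|<1$. - $\mathfrak g$ is a finite simple simply-laced or non-twisted simply-laced affine Kac–Moody algebra, with simple roots $\alpha_i$ ($i\in\Gamma$), Cartan matrix $a_{ij}=\alpha_j(h_{\alpha_i})$, and Cartan subalgebra $\mathfrak h$. - $\{\zeta^{\alpha_\mu}\}$ is the basis of $\mathfrak h$ dual to the coroots $\{h_{\alpha_\mu}\}$ (in the affine case the index set includes $d$, with $\zeta^{\alpha_d}=c$ dual to $d$). Thus $\alpha_i(\zeta^{\alpha_j})=\delta_{ij}$ for $i,j\in\Gamma$. - $U_q(\mathfrak g)$ is the quantized enveloping algebra with generators $e_i,f_i$ and $q^{h}$ ($h\in\mathfrak h$), with $q^he_iq^{-h}=q^{\alpha_i(h)}e_i$, $q^hf_iq^{-h}=q^{-\alpha_i(h)}f_i$, and the quantum Serre relations among the $e_i$ and among the $f_i$. - $\begin{bmatrix}n\\k\end{bmatrix}_q$ is the symmetric Gaussian binomial $[n]_q!/([k]_q![n-k]_q!)$ with $[n]_q=(q^n-q^{-n})/(q-q^{-1})$. Twisted subalgebras. For $\omega\in\mathfrak h\otimes\mathfrak h$, put $(\alpha_i\otimes\mathrm{id})(\omega)=\sum_\nu\omega_{i\nu}\zeta^{\alpha_\nu}\in\mathfrak h$. - $U_q(\mathfrak n_+)^{\omega}$ is the subalgebra of $U_q(\mathfrak b_+)$ generated by $\tilde e_i=q^{-(\alpha_i\otimes\mathrm{id})(\omega)}e_i$, $i\in\Gamma$. - $U_q(\mathfrak n_-)^{\omega}$ is the subalgebra of $U_q(\mathfrak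 b_-)$ generated by $\tilde f_i=f_i\,q^{(\alpha_i\otimes\mathrm{id})(\omega)}$, $i\in\Gamma$. *)

(* Defs.v *)
From HB Require Import structures.
From mathcomp Require Import all_boot all_order all_algebra.
Set Implicit Arguments. Unset Strict Implicit. Unset Printing Implicit Defensive.
Import Order.TTheory GRing.Theory Num.Theory.
Local Open Scope ring_scope.

Definition is_GCM n (A : 'M[int]_n) : Prop :=
  (forall i, A i i = 2) /\
  (forall i j, i != j -> A i j <= 0) /\
  (forall i j, A i j = 0 <-> A j i = 0).

(* simply-laced: symmetric *)
Definition is_symmetric_mx n (A : 'M[int]_n) : Prop := A^T = A.

Definition is_indecomposable n (A : 'M[int]_n) : Prop :=
  forall S : {set 'I_n}, S != set0 -> S != setT ->
    exists i j, i \in S /\ j \notin S /\ A i j != 0.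

Definition ratmx n (A : 'M[int]_n) : 'M[rat]_n := map_mx (fun z => z%:~R) A.

Definition qform n (A : 'M[int]_n) (v : 'rV[rat]_n) : rat :=
  (v *m ratmx A *m v^T) 0 0.

(* finite type: positive definite (for symmetric indecomposable GCMs) *)
Definition is_finite_type n (A : 'M[int]_n) : Prop :=
  forall v : 'rV[rat]_n, v != 0 -> 0 < qform A v.

Definition is_affine_type n (A : 'M[int]_n) : Prop :=
  (forall v : 'rV[rat]_n, 0 <= qform A v) /\ \rank (ratmx A) = n.-1.

(* Cartan matrix of a finite simple simply-laced Lie algebra (aff = false)
   or of a non-twisted simply-laced affine Kac-Moody algebra (aff = true). *)
Definition simply_laced_cartan (aff : bool) n (A : 'M[int]_n) : Prop :=
  (0 < n)%N /\ is_GCM A /\ is_symmetric_mx A /\ is_indecomposable A /\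
  (if aff then is_affine_type A else is_finite_type A).

(* ---------- the Cartan subalgebra h ----------
   h has the basis zeta^{alpha_mu}, mu in 'I_(n + aff): the first n indices
   are Gamma, the last one (present iff aff) is d, with zeta^{alpha_d} = c.
   An element of h is its row of coordinates in this basis.
   Since alpha_i(zeta^{alpha_j}) = delta_ij and alpha_i(c) = 0,
   alpha_i(h) is the i-th coordinate of h. *)
Definition hdim n (aff : bool) : nat := (n + aff)%N.

Definition gam n (aff : bool) (i : 'I_n) : 'I_(hdim n aff) :=
  widen_ord (leq_addr aff n) i.

Definition alpha (C : fieldType) n aff (i : 'I_n) (h : 'rV[C]_(hdim n aff)) : C :=
  h 0 (gam aff i).

Definition qint (C : fieldType) (q : C) (k : nat) : C :=
  (q ^+ k - q ^- k) / (q - q^-1).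
Definition qfact (C : fieldType) (q : C) (k : nat) : C :=
  \prod_(1 <= l < k.+1) qint q l.
Definition qbinom (C : fieldType) (q : C) (N k : nat) : C :=
  qfact q N / (qfact q k * qfact q (N - k)).

(* 1 - a_ij as a natural number (a_ij <= 0 for i <> j) *)
Definition serreN n (A : 'M[int]_n) (i j : 'I_n) : nat := absz (1 - A i j).

(* "q^z" for z in C: a chosen homomorphism (C,+) -> (C^*, .) with q^1 = q *)
Definition is_qpower (C : fieldType) (q : C) (qp : C -> C) : Prop :=
  (forall x y, qp (x + y) = qp x * qp y) /\ qp 1 = q.

Definition is_alg_hom (C : fieldType) (U V : algType C) (f : U -> V) : Prop :=
  (forall x y, f (x + y) = f x + f y) /\
  (forall (c : C) x, f (c *: x) = c *: f x) /\
  (forall x y, f (x * y) = f x * f y) /\ f 1 = 1.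

(* ---------- defining relations of U_q(b_+) (sgn = false)
                and of U_q(b_-) (sgn = true) ----------
   generators x_i (= e_i, resp. f_i) and K h (= q^h), h in h. *)
Definition Uqb_rels (C : fieldType) (q : C) (qp : C -> C) (sgn : bool)
    n aff (A : 'M[int]_n) (U : algType C)
    (x : 'I_n -> U) (K : 'rV[C]_(hdim n aff) -> U) : Prop :=
  K 0 = 1 /\
  (forall h h', K (h + h') = K h * K h') /\
  (forall h i, K h * x i * K (- h) =
               qp ((-1) ^+ sgn * alpha i h) *: x i) /\
  (forall i j, i != j ->
     \sum_(k < (serreN A i j).+1)
        ((-1) ^+ k * qbinom q (serreN A i j) k) *:
          (x i ^+ (serreN A i j - k) * x j * x i ^+ k) = 0).

(* (U, x, K) is U_q(b_+) (sgn = false) resp. U_q(b_-) (sgn = true):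
   the algebra presented by the above generators and relations,
   expressed through its universal property. *)
Definition is_Uqb (C : fieldType) (q : C) (qp : C -> C) (sgn : bool)
    n aff (A : 'M[int]_n) (U : algType C)
    (x : 'I_n -> U) (K : 'rV[C]_(hdim n aff) -> U) : Prop :=
  Uqb_rels q qp sgn A x K /\
  forall (V : algType C) (y : 'I_n -> V) (L : 'rV[C]_(hdim n aff) -> V),
    Uqb_rels q qp sgn A y L ->
    (exists f : U -> V, is_alg_hom f /\ (forall i, f (x i) = y i) /\
                        (forall h, f (K h) = L h)) /\
    (forall f g : U -> V, is_alg_hom f -> is_alg_hom g ->
       (forall i, f (x i) = g (x i)) -> (forall h, f (K h) = g (K h)) ->
       forall u, f u = g u).

Definition subalg_closed (C : fieldType) (U : algType C) (S : U -> Prop) : Prop :=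
  S 1 /\ (forall u v, S u -> S v -> S (u + v)) /\
  (forall (c : C) u, S u -> S (c *: u)) /\
  (forall u v, S u -> S v -> S (u * v)).

Definition gen_subalg (C : fieldType) (U : algType C) (I : Type) (g : I -> U)
    (u : U) : Prop :=
  forall S : U -> Prop, subalg_closed S -> (forall i, S (g i)) -> S u.

(* a character (unital algebra homomorphism to C) of the subalgebra N,
   given as a function on U whose restriction to N is the character *)
Definition is_character (C : fieldType) (U : algType C) (N : U -> Prop)
    (eps : U -> C) : Prop :=
  eps 1 = 1 /\
  (forall u v, N u -> N v -> eps (u + v) = eps u + eps v) /\
  (forall (c : C) u, N u -> eps (c *: u) = c * eps u) /\
  (forall u v, N u -> N v -> eps (u * v) = eps u * eps v).

(* twisted generators:  e~_i = q^{-(alpha_i (x) id)(omega)} e_i,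
                        f~_i = f_i q^{(alpha_i (x) id)(omega)}  *)
Definition omega_i (C : fieldType) n aff (w : 'M[C]_(hdim n aff)) (i : 'I_n)
  : 'rV[C]_(hdim n aff) := row (gam aff i) w.

Definition et (C : fieldType) n aff (w : 'M[C]_(hdim n aff)) (U : algType C)
    (e : 'I_n -> U) (K : 'rV[C]_(hdim n aff) -> U) (i : 'I_n) : U :=
  K (- omega_i w i) * e i.

Definition ft (C : fieldType) n aff (w : 'M[C]_(hdim n aff)) (U : algType C)
    (f : 'I_n -> U) (K : 'rV[C]_(hdim n aff) -> U) (i : 'I_n) : U :=
  f i * K (omega_i w i).

Definition twisted_serre_cond (C : fieldType) (q : C) (qp : C -> C)
    n aff (A : 'M[int]_n) (w : 'M[C]_(hdim n aff)) (i j : 'I_n) : Prop :=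
  \sum_(k < (serreN A i j).+1)
     (-1) ^+ k * qbinom q (serreN A i j) k *
       qp (k%:R * (w (gam aff j) (gam aff i) - w (gam aff i) (gam aff j))) = 0.

(* Main.v *)
Require Import Defs.
From HB Require Import structures.
From mathcomp Require Import all_boot all_order all_algebra.
Import Order.TTheory GRing.Theory Num.Theory.
Local Open Scope ring_scope.
From Stdlib Require Import ClassicalEpsilon FunctionalExtensionality ProofIrrelevance.
Set Implicit Arguments. Unset Strict Implicit. Unset Printing Implicit Defensive.

Section LinOps.
Variables (C : fieldType) (m : nat).
Local Notation P := ('I_m -> C).
Definition Fn := P -> C.
Definition linearb (l : Fn -> Fn) : Prop :=
  (forall f g, l (fun p => f p + g p) = fun p => l f p + l g p) /\
  (forall c f, l (fun p => c * f p) = fun p => c * l f p).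
Record linop := Linop { lfun :> Fn -> Fn; lfunP : linearb lfun }.

Lemma linop_eq (x y : linop) : (forall f p, x f p = y f p) -> x = y.
Proof.
case: x y => [fx Hx] [fy Hy] /= E.
have E' : fx = fy by apply: functional_extensionality => f; apply: functional_extensionality => p; exact: E.
subst; f_equal; exact: proof_irrelevance.
Qed.

Definition linop_eqb (x y : linop) : bool :=
  if excluded_middle_informative (x = y) then true else false.
Lemma linop_eqP : Equality.axiom linop_eqb.
Proof. move=> x y; rewrite /linop_eqb; case: excluded_middle_informative => H; constructor => //. Qed.
HB.instance Definition _ := hasDecEq.Build linop linop_eqP.

Definition linop_find (Q : pred linop) (n : nat) : option linop :=
  if excluded_middle_informative (exists x, Q x) is left H
  then Some (proj1_sig (constructive_indefinite_description _ H)) else None.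
Lemma linop_choice1 Q n x : linop_find Q n = Some x -> Q x.
Proof. rewrite /linop_find; case: excluded_middle_informative => // H [<-].
by case: constructive_indefinite_description. Qed.
Lemma linop_choice2 (Q : pred linop) : (exists x, Q x) -> exists n, linop_find Q n.
Proof. move=> H; exists 0%N; rewrite /linop_find; case: excluded_middle_informative => //. Qed.
Lemma linop_choice3 (Q R : pred linop) : Q =1 R -> linop_find Q =1 linop_find R.
Proof. move=> E; have -> : Q = R by apply: functional_extensionality. by []. Qed.
HB.instance Definition _ := hasChoice.Build linop linop_choice1 linop_choice2 linop_choice3.

Lemma lin_add (x : linop) f g : x (fun p => f p + g p) = fun p => x f p + x g p.
Proof. by case: (lfunP x). Qed.
Lemma lin_scale (x : linop) c f : x (fun p => c * f p) = fun p => c * x f p.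
Proof. by case: (lfunP x). Qed.
Lemma lin_addp (x : linop) f g p : x (fun p => f p + g p) p = x f p + x g p.
Proof. by rewrite lin_add. Qed.
Lemma lin_scalep (x : linop) c f p : x (fun p => c * f p) p = c * x f p.
Proof. by rewrite lin_scale. Qed.
Lemma lin_zerop (x : linop) p : x (fun _ => 0) p = 0.
Proof. have E : (fun _ : P => (0 : C)) = (fun q => 0 * (fun _ => 0) q).
  by apply: functional_extensionality => ?; rewrite mul0r.
by rewrite E lin_scalep mul0r. Qed.
Lemma lin_oppp (x : linop) f p : x (fun p => - f p) p = - x f p.
Proof. have E : (fun q => - f q) = (fun q => (-1) * f q).
  by apply: functional_extensionality => ?; rewrite mulN1r.
by rewrite E lin_scalep mulN1r. Qed.

Ltac linb := split => [f g|k f]; apply: functional_extensionality => p /=.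

Definition lzero : linop. refine (@Linop (fun _ _ => 0) _). linb. by rewrite addr0. by rewrite mulr0. Defined.
Definition ladd (x y : linop) : linop.
refine (@Linop (fun f p => x f p + y f p) _).
linb. by rewrite !lin_addp addrACA. by rewrite !lin_scalep mulrDr. Defined.
Definition lopp (x : linop) : linop.
refine (@Linop (fun f p => - x f p) _).
linb. by rewrite lin_addp opprD. by rewrite lin_scalep mulrN. Defined.
Definition lone : linop. refine (@Linop (fun f => f) _). by []. Defined.
Definition lmul (x y : linop) : linop.
refine (@Linop (fun f => x (y f)) _).
linb. by rewrite lin_add lin_addp. by rewrite lin_scale lin_scalep. Defined.
Definition lscale (c : C) (x : linop) : linop.
refine (@Linop (fun f p => c * x f p) _).
linb. by rewrite lin_addp mulrDr. by rewrite lin_scalep mulrCA. Defined.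

Let p0 : P := fun _ => 0.

Lemma laddA : associative ladd. Proof. by move=> x y z; apply: linop_eq => f p /=; rewrite addrA. Qed.
Lemma laddC : commutative ladd. Proof. by move=> x y; apply: linop_eq => f p /=; rewrite addrC. Qed.
Lemma ladd0 : left_id lzero ladd. Proof. by move=> x; apply: linop_eq => f p /=; rewrite add0r. Qed.
Lemma laddN : left_inverse lzero lopp ladd. Proof. by move=> x; apply: linop_eq => f p /=; rewrite addNr. Qed.
Lemma lmulA : associative lmul. Proof. by move=> x y z; apply: linop_eq. Qed.
Lemma lmul1 : left_id lone lmul. Proof. by move=> x; apply: linop_eq. Qed.
Lemma lmulr1 : right_id lone lmul. Proof. by move=> x; apply: linop_eq. Qed.
Lemma lmulDl : left_distributive lmul ladd. Proof. by move=> x y z; apply: linop_eq. Qed.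
Lemma lmulDr : right_distributive lmul ladd.
Proof. by move=> x y z; apply: linop_eq => f p /=; rewrite lin_addp. Qed.
Lemma lone_neq0 : lone != lzero.
Proof. apply/eqP => E. have := f_equal (fun x : linop => x (fun _ => 1) p0) E => /=.
by move/eqP; rewrite oner_eq0. Qed.

HB.instance Definition _ := GRing.isNzRing.Build linop laddA laddC ladd0 laddN lmulA lmul1 lmulr1 lmulDl lmulDr lone_neq0.

Lemma lscaleA a b v : lscale a (lscale b v) = lscale (a * b) v.
Proof. by apply: linop_eq => f p /=; rewrite mulrA. Qed.
Lemma lscale1 : left_id 1 lscale. Proof. by move=> x; apply: linop_eq => f p /=; rewrite mul1r. Qed.
Lemma lscaleDr : right_distributive lscale +%R.
Proof. by move=> a x y; apply: linop_eq => f p /=; rewrite mulrDr. Qed.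
Lemma lscaleDl v : {morph lscale^~ v: a b / a + b}.
Proof. by move=> a b; apply: linop_eq => f p /=; rewrite mulrDl. Qed.
HB.instance Definition _ := GRing.Zmodule_isLmodule.Build C linop lscaleA lscale1 lscaleDr lscaleDl.
Lemma lscaleAl (a : C) (u v : linop) : a *: (u * v) = (a *: u) * v.
Proof. by apply: linop_eq. Qed.
HB.instance Definition _ := GRing.Lmodule_isLalgebra.Build C linop lscaleAl.
Lemma lscaleAr (a : C) (u v : linop) : a *: (u * v) = u * (a *: v).
Proof. by apply: linop_eq => f p /=; rewrite lin_scalep. Qed.
HB.instance Definition _ := GRing.Lalgebra_isAlgebra.Build C linop lscaleAr.

Lemma lmulE (x y : linop) f : (x * y) f = x (y f). Proof. by []. Qed.
Lemma laddE (x y : linop) f p : (x + y) f p = x f p + y f p. Proof. by []. Qed.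
Lemma lscaleE c (x : linop) f p : (c *: x) f p = c * x f p. Proof. by []. Qed.
Lemma loneE f : (1 : linop) f = f. Proof. by []. Qed.
Lemma lzeroE f p : (0 : linop) f p = 0. Proof. by []. Qed.
End LinOps.

Lemma e1 (R : zmodType) (A B c d : R) : -A + -(B + c) = d - c + -B + -(A + d).
Proof. rewrite !opprD !addrA [d - c - B]addrC [_ - A]addrC. rewrite !addrA [- A + _]addrC.
by rewrite [in RHS]addrAC addrK. Qed.

Section Ops.
Variables (C : fieldType) (m : nat) (qp : C -> C).
Hypothesis qpD : forall x y, qp (x + y) = qp x * qp y.
Hypothesis qp0 : qp 0 = 1.
Local Notation P := ('I_m -> C).

Definition dot (p : P) (v : 'rV[C]_m) : C := \sum_(k < m) p k * v 0 k.
Definition shiftp (p : P) (g : 'I_m) : P := fun k => p k + (k == g)%:R.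

Lemma dot_shift p g v : dot (shiftp p g) v = dot p v + v 0 g.
Proof.
rewrite /dot /shiftp; under eq_bigr do rewrite mulrDl.
rewrite big_split /=; congr (_ + _).
rewrite (bigD1 g) //= eqxx mul1r big1 ?addr0 // => k /negbTE ->; by rewrite mul0r.
Qed.
Lemma dotN p v : dot p (- v) = - dot p v.
Proof. by rewrite /dot -sumrN; apply: eq_bigr => k _; rewrite mxE mulrN. Qed.
Lemma dotD p v v' : dot p (v + v') = dot p v + dot p v'.
Proof. by rewrite /dot -big_split; apply: eq_bigr => k _; rewrite mxE mulrDr. Qed.
Lemma dot0 p : dot p 0 = 0.
Proof. by rewrite /dot big1 // => k _; rewrite mxE mulr0. Qed.
Lemma shiftpC p g g' : shiftp (shiftp p g) g' = shiftp (shiftp p g') g.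
Proof. by apply: functional_extensionality => k; rewrite /shiftp addrAC. Qed.

Lemma qpN x : qp x * qp (- x) = 1.
Proof. by rewrite -qpD addrN. Qed.

Definition Lmul (s : C) (h : 'rV[C]_m) : linop C m.
refine (@Linop C m (fun f p => qp (s * dot p h) * f p) _).
split => [f g|k f]; apply: functional_extensionality => p /=.
by rewrite mulrDr. by rewrite mulrCA. Defined.

Definition Xop (b : C) (g : 'I_m) (v : 'rV[C]_m) : linop C m.
refine (@Linop C m (fun f p => b * qp (- dot p v) * f (shiftp p g)) _).
split => [f k|k f]; apply: functional_extensionality => p /=.
by rewrite mulrDr. by rewrite mulrCA. Defined.

Lemma Lmul0 s : Lmul s 0 = 1.
Proof. by apply: linop_eq => f p /=; rewrite dot0 mulr0 qp0 mul1r. Qed.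
Lemma LmulD s h h' : Lmul s (h + h') = Lmul s h * Lmul s h'.
Proof. by apply: linop_eq => f p /=; rewrite dotD mulrDr qpD mulrA. Qed.
Lemma LXL s b g v h : Lmul s h * Xop b g v * Lmul s (- h) = qp ((- s) * h 0 g) *: Xop b g v.
Proof.
apply: linop_eq => f p /=. rewrite dotN dot_shift.
rewrite mulrCA [in RHS]mulrCA; congr (_ * _).
rewrite mulrA -qpD; congr (qp _ * _).
by rewrite mulNr mulrN mulrDr opprD addrA addrN add0r.
Qed.
Lemma XXcomm b g v b' g' v' :
  Xop b g v * Xop b' g' v' = qp (v 0 g' - v' 0 g) *: (Xop b' g' v' * Xop b g v).
Proof.
apply: linop_eq => f p /=. rewrite !dot_shift shiftpC.
rewrite !mulrA; congr (_ * _).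
rewrite (ACl ((1*3)*(2*4))%AC) [RHS](ACl ((4*2)*((1*3)*5))%AC) /= -!qpD.
by congr (_ * qp _); apply: e1.
Qed.
End Ops.

Section Serre.
Variables (C : fieldType) (V : algType C) (qp : C -> C).
Hypothesis qpD : forall x y, qp (x + y) = qp x * qp y.
Hypothesis qp0 : qp 0 = 1.

Lemma comm_pow (xi xj : V) d k : xj * xi = qp d *: (xi * xj) ->
  xj * xi ^+ k = qp (k%:R * d) *: (xi ^+ k * xj).
Proof.
move=> H; elim: k => [|k IH]; first by rewrite !expr0 mul0r qp0 scale1r mulr1 mul1r.
rewrite exprSr mulrA IH -scalerAl -[in LHS]mulrA H -scalerAr scalerA mulrA.
by rewrite -natr1 mulrDl mul1r qpD.
Qed.

Lemma serre_gen (xi xj : V) d N (c : nat -> C) :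
  xj * xi = qp d *: (xi * xj) ->
  \sum_(k < N.+1) c k * qp (k%:R * d) = 0 ->
  \sum_(k < N.+1) c k *: (xi ^+ (N - k) * xj * xi ^+ k) = 0.
Proof.
move=> H S.
transitivity (\sum_(k < N.+1) (c k * qp (k%:R * d)) *: (xi ^+ N * xj)).
  apply: eq_bigr => k _.
  rewrite -mulrA (comm_pow _ H) -scalerAr scalerA mulrA -exprD subnK //.
  by rewrite -ltnS ltn_ord.
by rewrite -scaler_suml S scale0r.
Qed.
End Serre.

Lemma gen_closed (C : fieldType) (U : algType C) (I : Type) (g : I -> U) :
  Defs.subalg_closed (gen_subalg g).
Proof.
split; first by move=> S [? _].
split; first by move=> u v Hu Hv S HS Hg; case: (HS) => _ [Hadd _]; apply: Hadd; [apply: Hu|apply: Hv].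
split; first by move=> c u Hu S HS Hg; case: (HS) => _ [_ [Hs _]]; apply: Hs; apply: Hu.
by move=> u v Hu Hv S HS Hg; case: (HS) => _ [_ [_ Hm]]; apply: Hm; [apply: Hu|apply: Hv].
Qed.

Lemma char_unique (C : fieldType) (U : algType C) (I : Type) (g : I -> U) (a : I -> C)
  (eps1 eps2 : U -> C) :
  is_character (gen_subalg g) eps1 -> is_character (gen_subalg g) eps2 ->
  (forall i, eps1 (g i) = a i) -> (forall i, eps2 (g i) = a i) ->
  forall u, gen_subalg g u -> eps1 u = eps2 u.
Proof.
move=> [h1 [a1 [s1 m1]]] [h2 [a2 [s2 m2]]] e1 e2 u Hu.
have [C1 [C2 [C3 C4]]] := gen_closed g.
suff : gen_subalg g u /\ eps1 u = eps2 u by case.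
apply: (Hu (fun u => gen_subalg g u /\ eps1 u = eps2 u)).
  split; first by split; rewrite ?h1 ?h2.
  split; first by move=> x y [Hx Ex] [Hy Ey]; split; [exact: C2 | rewrite a1 // a2 // Ex Ey].
  split; first by move=> c x [Hx Ex]; split; [exact: C3 | rewrite s1 // s2 // Ex].
  by move=> x y [Hx Ex] [Hy Ey]; split; [exact: C4 | rewrite m1 // m2 // Ex Ey].
move=> i; split; last by rewrite e1 e2.
by move=> S _ Hg; apply: Hg.
Qed.

Section Char.
Variables (C : fieldType) (m : nat) (U : algType C) (phi : U -> linop C m).
Hypothesis Hphi : is_alg_hom phi.
Definition one_f : Fn C m := fun _ => 1.
Definition p0 : 'I_m -> C := fun _ => 0.
Definition epsf u := phi u one_f p0.
Variables (I : Type) (g : I -> U) (a : I -> C).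
Hypothesis Hg : forall i p, phi (g i) one_f p = a i.

Lemma const_gen u : gen_subalg g u -> forall p, phi u one_f p = epsf u.
Proof.
case: Hphi => Hadd [Hs [Hm H1]].
move=> Hu; apply: (Hu (fun u => forall p, phi u one_f p = phi u one_f p0)).
  split; first by move=> p; rewrite H1.
  split; first by move=> x y Hx Hy p; rewrite Hadd laddE laddE Hx Hy.
  split; first by move=> c x Hx p; rewrite Hs lscaleE lscaleE Hx.
  move=> x y Hx Hy p; rewrite Hm !lmulE.
  have E : phi y one_f = fun p => phi y one_f p0 * one_f p.
    by apply: functional_extensionality => q; rewrite /one_f mulr1 Hy.
  by rewrite E !lin_scalep Hx.
by move=> i p; rewrite !Hg.
Qed.

Lemma char_ok : is_character (gen_subalg g) epsf /\ forall i, epsf (g i) = a i.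
Proof.
case: (Hphi) => Hadd [Hs [Hm H1]].
split; last by move=> i; rewrite /epsf Hg.
split; first by rewrite /epsf H1.
split; first by move=> x y _ _; rewrite /epsf Hadd laddE.
split; first by move=> c x _; rewrite /epsf Hs lscaleE.
move=> x y Hx Hy; rewrite /epsf Hm lmulE.
have E : phi y one_f = fun p => epsf y * one_f p.
  by apply: functional_extensionality => q; rewrite /one_f mulr1 const_gen.
by rewrite E lin_scalep /one_f mulr1 mulrC.
Qed.
End Char.

Lemma omE (C : fieldType) n aff (w : 'M[C]_(hdim n aff)) i k : omega_i w i 0 k = w (gam aff i) k.
Proof. by rewrite /omega_i /row mxE. Qed.

Lemma rels_V (C : fieldType) (q : C) (qp : C -> C)
  (qpD : forall x y, qp (x + y) = qp x * qp y) (qp0 : qp 0 = 1)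
  (sgn : bool) n aff (A : 'M[int]_n) (w : 'M[C]_(hdim n aff)) (b : 'I_n -> C) (s : C) :
  - s = (-1) ^+ sgn ->
  (forall i j, i != j -> twisted_serre_cond q qp A w i j) ->
  Uqb_rels q qp sgn A (fun i => Xop qp (b i) (gam aff i) (omega_i w i)) (Lmul qp s).
Proof.
move=> hs Hser.
split; first exact: Lmul0.
split; first exact: LmulD.
split; first by move=> h i; rewrite LXL // hs.
move=> i j Hij.
apply: (@serre_gen _ _ qp qpD qp0 _ _ (w (gam aff j) (gam aff i) - w (gam aff i) (gam aff j)) _ (fun k : nat => (-1) ^+ k * qbinom q (serreN A i j) k)).
  by rewrite XXcomm // !omE.
exact: Hser.
Qed.
Unset Implicit Arguments.
Theorem mainTheorem4 (C : numClosedFieldType) (q : C) (qp : C -> C)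
    (n : nat) (aff : bool) (A : 'M[int]_n) (w : 'M[C]_(hdim n aff)) :
  0 < `|q| < 1 ->
  is_qpower q qp ->
  simply_laced_cartan aff A ->
  (forall i j : 'I_n, i != j -> twisted_serre_cond q qp A w i j) ->
  forall a : 'I_n -> C,
    (forall (U : algType C) (e : 'I_n -> U) (K : 'rV[C]_(hdim n aff) -> U),
       is_Uqb q qp false A e K ->
       let N := gen_subalg (et w e K) in
       (exists eps : U -> C, is_character N eps /\
                             forall i, eps (et w e K i) = a i) /\
       (forall eps1 eps2 : U -> C,
          is_character N eps1 -> is_character N eps2 ->
          (forall i, eps1 (et w e K i) = a i) ->
          (forall i, eps2 (et w e K i) = a i) ->
          forall u, N u -> eps1 u = eps2 u)) /\
    (forall (U : algType C) (f : 'I_n -> U) (K : 'rV[C]_(hdim n aff) -> U),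
       is_Uqb q qp true A f K ->
       let N := gen_subalg (ft w f K) in
       (exists eps : U -> C, is_character N eps /\
                             forall i, eps (ft w f K i) = a i) /\
       (forall eps1 eps2 : U -> C,
          is_character N eps1 -> is_character N eps2 ->
          (forall i, eps1 (ft w f K i) = a i) ->
          (forall i, eps2 (ft w f K i) = a i) ->
          forall u, N u -> eps1 u = eps2 u)).
Proof.
move=> /andP [Hq _] [qpD qp1] _ Hser a.
have qp0 : qp 0 = 1.
  have q0 : q != 0 by rewrite -normr_gt0.
  apply: (mulfI q0); by rewrite mulr1 -qp1 -qpD addr0.
split.
- move=> U e K HU N; split.
  + case: HU => _ Huniv.
    have hs : - (-1) = (-1) ^+ false :> C by rewrite opprK expr0.
    have [[phi [Hphi [Hx HK]]] _] := Huniv (linop C (hdim n aff)) _ _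
       (@rels_V C q qp qpD qp0 false n aff A w a (-1) hs Hser).
    exists (epsf phi); apply: char_ok => // i p.
    case: (Hphi) => _ [_ [Hm _]].
    rewrite /et Hm HK Hx lmulE /= dotN mulN1r opprK /one_f mulr1 mulrCA qpN //.
    by rewrite mulr1.
  + move=> e1 e2 H1 H2 H3 H4 u Hu; exact: char_unique H1 H2 H3 H4 u Hu.
- move=> U f K HU N; split.
  + case: HU => _ Huniv.
    have hs : - 1 = (-1) ^+ true :> C by rewrite expr1.
    have [[phi [Hphi [Hx HK]]] _] := Huniv (linop C (hdim n aff)) _ _
       (@rels_V C q qp qpD qp0 true n aff A w (fun i => a i * qp (- w (gam aff i) (gam aff i))) 1 hs Hser).
    exists (epsf phi); apply: char_ok => // i p.
    case: (Hphi) => _ [_ [Hm _]].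
    rewrite /ft Hm HK Hx lmulE /= dot_shift omE mul1r /one_f mulr1.
    rewrite -!mulrA -!qpD addKr addNr qp0 mulr1 //.
  + move=> e1 e2 H1 H2 H3 H4 u Hu; exact: char_unique H1 H2 H3 H4 u Hu.
Qed.
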